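(* In a multi-channel single-hop radio network with $b$ channels in which at most $k$ stations are activated spontaneously (at arbitrary times), the randomized algorithm Channel-Screening — in which, in every round, each active station independently for each channel $\beta\in\{1,\dots,b\}$ transmits on channel $\beta$ with probability $k^{-\beta/b}$, until a message is heard on some channel — wakes up the network within $\mathcal O(k^{1/b}\ln\frac{1}{\epsilon})$ time steps (counted from the first spontaneous activation) with probability at least $1-\epsilon$, for every $0<\epsilon<1$.
   Context: Model: $n$ stations and $b$ channels numbered $1,\dots,b$; time is divided into synchronous rounds; each active station may transmit on any subset of channels per round and all stations listen to all channels. A message on a channel in a round is heard by all stations iff exactly one station transmits on that channel in that round; there is no collision detection. Initially all stations are passive; at most $k$ stations become active spontaneously at arbitrary time steps; $k$ and $b$ are known, $n$ need not be. The network is woken up at the first time step at which some channel carries a transmission of exactly one station. All random choices are independent. *)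

(* Defs.v *)
From HB Require Import structures.
From mathcomp Require Import all_boot all_order all_algebra.
From mathcomp Require Import reals exp Rstruct.
Set Implicit Arguments. Unset Strict Implicit. Unset Printing Implicit Defensive.
Import Order.TTheory GRing.Theory Num.Theory.
Local Open Scope ring_scope.

Notation RR := Rdefinitions.R.

(* Transmission probability on channel beta+1 (channels numbered 1..b,
   represented by beta : 'I_b): k^{-(beta+1)/b}. *)
Definition chan_prob (k b : nat) (beta : 'I_b) : RR :=
  powR (k%:R) (- ((beta.+1)%:R / b%:R)).

(* Activation pattern: act i = Some a  iff station i becomes active
   (spontaneously) at time step a; None = never activated. *)
Definition active (n : nat) (act : 'I_n -> option nat) (i : 'I_n) (t : nat) : bool :=
  if act i is Some a then (a <= t)%N else false.

(* Outcome of all random choices for rounds 0..N-1: omega (i, t, beta) = true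
   iff station i, if active in round t, transmits on channel beta+1. *)
Definition outcome (n N b : nat) := {ffun 'I_n * 'I_N * 'I_b -> bool}.

Definition weight (n N k b : nat) (omega : outcome n N b) : RR :=
  \prod_(x : 'I_n * 'I_N * 'I_b)
     (if omega x then chan_prob k x.2 else 1 - chan_prob k x.2).

Definition heard (n N b : nat) (act : 'I_n -> option nat) (omega : outcome n N b)
  (t : 'I_N) (beta : 'I_b) : bool :=
  #|[set i : 'I_n | active act i t && omega (i, t, beta)]| == 1%N.

Definition woken_within (n N b : nat) (act : 'I_n -> option nat)
  (omega : outcome n N b) : bool :=
  [exists t : 'I_N, exists beta : 'I_b, heard act omega t beta].

Definition prob_woken (n N k b : nat) (act : 'I_n -> option nat) : RR :=
  \sum_(omega : outcome n N b | woken_within act omega) weight k omega.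

(* Main.v *)
Require Import Defs.
From HB Require Import structures.
From mathcomp Require Import all_boot all_order all_algebra.
From mathcomp Require Import reals exp Rstruct.
From mathcomp Require Import ring lra.
From mathcomp Require sequences.
Import Order.TTheory GRing.Theory Num.Theory.
Local Open Scope ring_scope.
Notation expR := sequences.expR.

Section Helpers.
Local Set Implicit Arguments.
Local Unset Strict Implicit.
Lemma prod_if (I : finType) (P : pred I) (F : I -> RR) :
  \prod_i (if P i then F i else 0) = if [forall i, P i] then \prod_i F i else 0.
Proof.
case: ifP => [/forallP H | /negbT].
  by apply: eq_bigr => i _; rewrite H.
rewrite negb_forall => /existsP [x /negbTE Hx].
by rewrite (bigD1 x) //= Hx mul0r.
Qed.

Definition bw (I : finType) (p : I -> RR) (s : {ffun I -> bool}) : RR :=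
  \prod_x (if s x then p x else 1 - p x).

Lemma bw_ge0 (I : finType) (p : I -> RR) s :
  (forall x, 0 <= p x <= 1) -> 0 <= bw p s.
Proof.
move=> Hp; apply: prodr_ge0 => x _; have /andP[h1 h2] := Hp x.
by case: (s x) => //; rewrite subr_ge0.
Qed.

Lemma bw_sum1 (I : finType) (p : I -> RR) :
  \sum_(s : {ffun I -> bool}) bw p s = 1.
Proof.
transitivity (\prod_x \sum_(c : bool) (if c then p x else 1 - p x)).
  by rewrite bigA_distr_bigA.
by apply: big1 => x _; rewrite big_bool /= addrC subrK.
Qed.

Lemma cyl (I : finType) (p : I -> RR) (S : {pred I}) (v : I -> bool) :
 \sum_(s : {ffun I -> bool}) (if [forall x in S, s x == v x] then bw p s else 0)
 = \prod_(x in S) (if v x then p x else 1 - p x).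
Proof.
rewrite [RHS]big_mkcond /=.
transitivity (\prod_x \sum_(c : bool) ((if x \in S then (c == v x)%:R else 1) *
     (if c then p x else 1 - p x))); last first.
  apply: eq_bigr => x _; rewrite big_bool /=.
  case: (x \in S); case: (v x) => /=; rewrite ?mul1r ?mul0r ?add0r ?addr0 //.
  all: try by rewrite addrC subrK.
rewrite bigA_distr_bigA /=; apply: eq_bigr => s _.
case: ifP => [/forall_inP H | /negbT].
  apply: eq_bigr => x _; have [xS|xS] := boolP (x \in S); rewrite ?(negbTE xS) ?mul1r //.
  by rewrite (eqP (H x xS)) eqxx mul1r.
rewrite negb_forall_in => /exists_inP [x xS ne].
by rewrite (bigD1 x) //= xS (negbTE ne) !mul0r.
Qed.
Definition rnd (n b : nat) := {ffun 'I_n * 'I_b -> bool}.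
Definition unc (n N b : nat) (f : {ffun 'I_N -> rnd n b}) : outcome n N b :=
  [ffun x => f x.1.2 (x.1.1, x.2)].
Definition cur (n N b : nat) (om : outcome n N b) : {ffun 'I_N -> rnd n b} :=
  [ffun t => [ffun ib => om (ib.1, t, ib.2)]].

Lemma uncK n N b : cancel (@unc n N b) (@cur n N b).
Proof.
move=> f; apply/ffunP => t; apply/ffunP => [[i be]].
by rewrite !ffunE.
Qed.
Lemma curK n N b : cancel (@cur n N b) (@unc n N b).
Proof. by move=> om; apply/ffunP => [[[i t] be]]; rewrite !ffunE. Qed.

Lemma uncE n N b (f : {ffun 'I_N -> rnd n b}) x : unc f x = f x.1.2 (x.1.1, x.2).
Proof. by rewrite ffunE. Qed.

Definition cp (k b : nat) (x : 'I_b) := chan_prob k x.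

Lemma weight_bw n N k b (om : outcome n N b) :
  weight k om = bw (fun x : 'I_n * 'I_N * 'I_b => cp k x.2) om.
Proof. by []. Qed.

Lemma weight_unc n N k b (f : {ffun 'I_N -> rnd n b}) :
  weight k (unc f) = \prod_t bw (fun x : 'I_n * 'I_b => cp k x.2) (f t).
Proof.
rewrite /weight /bw.
rewrite (eq_bigr (fun x : 'I_n * 'I_N * 'I_b => if f x.1.2 (x.1.1,x.2) then chan_prob k x.2 else 1 - chan_prob k x.2)); last first.
  by move=> x _; rewrite /unc ffunE.
transitivity (\prod_(t : 'I_N) \prod_(i : 'I_n) \prod_(be : 'I_b)
   (if f t (i, be) then chan_prob k be else 1 - chan_prob k be)).
  rewrite exchange_big /=.
  rewrite (pair_bigA _ (fun (i : 'I_n) (t : 'I_N) => \prod_(be : 'I_b)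
   (if f t (i, be) then chan_prob k be else 1 - chan_prob k be))) /=.
  by rewrite (pair_bigA _ (fun it (be : 'I_b) =>
   (if f it.2 (it.1, be) then chan_prob k be else 1 - chan_prob k be))) /=.
apply: eq_bigr => t _.
rewrite (pair_bigA _ (fun (i : 'I_n) (be : 'I_b) =>
   (if f t (i, be) then chan_prob k be else 1 - chan_prob k be))) /=.
by apply: eq_bigr => -[i be].
Qed.

Definition hr n b (act : 'I_n -> option nat) (t : nat) (u : rnd n b) (be : 'I_b) : bool :=
  #|[set i : 'I_n | active act i t && u (i, be)]| == 1%N.
Definition failr n b (act : 'I_n -> option nat) (t : nat) (u : rnd n b) : bool :=
  [forall be : 'I_b, ~~ hr act t u be].

Lemma woken_unc n N b act (f : {ffun 'I_N -> rnd n b}) :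
  woken_within act (unc f) = ~~ [forall t : 'I_N, failr act t (f t)].
Proof.
rewrite /woken_within negb_forall; apply: eq_existsb => t.
rewrite /failr negb_forall; apply: eq_existsb => be; rewrite negbK /heard /hr.
congr (_ == _); apply: eq_card => i; by rewrite !inE /unc ffunE.
Qed.

Lemma nonwoken n N k b act :
  \sum_(om : outcome n N b | ~~ woken_within act om) weight k om =
  \prod_(t : 'I_N) \sum_(u : rnd n b)
     (if failr act t u then bw (fun x : 'I_n * 'I_b => cp k x.2) u else 0).
Proof.
rewrite (reindex (@unc n N b)) /=; last first.
  by exists (@cur n N b) => x _; [apply: uncK | apply: curK].
rewrite bigA_distr_bigA /= big_mkcond /=; apply: eq_bigr => f _.
by rewrite woken_unc negbK prod_if weight_unc.
Qed.

Lemma hr_prob n k b act t (be : 'I_b) :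
  \sum_(u : rnd n b) (if hr act t u be then bw (fun x : 'I_n * 'I_b => cp k x.2) u else 0)
  = (cp k be * (1 - cp k be) ^+ (#|[set i : 'I_n | active act i t]|.-1))
      *+ #|[set i : 'I_n | active act i t]|.
Proof.
set A := [set i : 'I_n | active act i t].
pose S := [pred x : 'I_n * 'I_b | (x.1 \in A) && (x.2 == be)].
set w := bw _.
have key : forall (u : rnd n b) j, j \in A ->
    [forall x in S, u x == (x.1 == j)] =
    ([set i | active act i t && u (i, be)] == [set j]).
  move=> u j jA; apply/idP/idP.
    move/forall_inP => H; apply/eqP/setP => i; rewrite !inE.
    case Ai: (active act i t) => /=.
      by apply/eqP; apply: (H (i, be)); rewrite inE /= inE Ai eqxx.
    apply/esym/eqP => ij; move: jA; rewrite -ij inE Ai.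
    done.
  move/eqP/setP => H; apply/forall_inP => -[i b'] /andP [/= Ai /eqP ->] /=.
  by have := H i; rewrite !inE; move: Ai; rewrite inE => -> /= ->.
transitivity (\sum_(j in A) \sum_(u : rnd n b)
   (if [forall x in S, u x == (x.1 == j)] then w u else 0)).
  rewrite exchange_big /=; apply: eq_bigr => u _.
  rewrite (eq_bigr (fun j => if [set i | active act i t && u (i, be)] == [set j]
                              then w u else 0)); last by move=> j jA; rewrite key.
  rewrite /hr; case: ifP => [/cards1P [j0 Hj0] | H1].
    have j0A : j0 \in A.
      have : j0 \in [set i | active act i t && u (i, be)] by rewrite Hj0 set11.
      by rewrite !inE => /andP[].
    rewrite (bigD1 j0) //= Hj0 eqxx big1 ?addr0 // => j /andP [_ ne].
    case: eqP => // /setP /(_ j0); rewrite !inE eqxx eq_sym.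
    by move/negbTE: ne => ->.
  rewrite big1 // => j _; case: eqP => // E.
  by move: H1; rewrite E cards1 eqxx.
rewrite -sumr_const; apply: eq_bigr => j jA.
rewrite cyl.
rewrite (eq_bigl (fun x : 'I_n * 'I_b => (x.1 \in A) && (x.2 == be))) //.
transitivity (\prod_(i in A) \prod_(b' : 'I_b | b' == be)
   (if i == j then cp k b' else 1 - cp k b')).
  by rewrite pair_big.
rewrite (eq_bigr (fun i => if i == j then cp k be else 1 - cp k be)); last first.
  by move=> i _; rewrite big_pred1_eq.
rewrite (bigD1 j) //= eqxx; congr (_ * _).
rewrite (eq_bigr (fun _ => 1 - cp k be)); last by move=> i /andP[_ /negbTE ->].
rewrite prodr_const; congr (_ ^+ _).
rewrite (cardD1 j A) jA add1n /=; apply: eq_card => i; by rewrite -topredE /= !inE andbC.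
Qed.
Lemma cp_bounds k b (x : 'I_b) : (1 <= k)%N -> 0 <= chan_prob k x <= 1.
Proof.
move=> k1; rewrite /chan_prob powR_ge0 /=.
rewrite -[X in _ <= X](powRr0 k%:R); apply: ler_powR; first by rewrite ler1n.
by rewrite oppr_le0 divr_ge0.
Qed.

Lemma bern (p : RR) (m : nat) : 0 <= p <= 1 -> (1 <= m)%N -> m%:R * p <= 1 ->
  expR (-1) <= (1 - p) ^+ m.-1.
Proof.
move=> /andP[p0 p1] m1 mp.
case: m m1 mp => [//|[|m]] _ mp.
  by rewrite expr0 expR_le1 oppr_le0.
have hm : (2 : RR) <= m.+2%:R by rewrite ler_nat.
have plt : p < 1.
  have : m.+2%:R * p <= 1 := mp.
  nra.
set r := p / (1 - p).
have h1p : 0 < 1 - p by rewrite subr_gt0.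
have hr : r * (1 - p) = p by rewrite /r mulfVK // gt_eqF.
have r0 : 0 <= r by rewrite /r divr_ge0 // ltW.
have hE := expR_ge1Dx r.
have hEF : expR r * expR (- r) = 1 by rewrite expRxMexpNx_1.
have hF0 : 0 < expR (- r) := expR_gt0 _.
have h2 : expR (- r) <= 1 - p.
  have : expR (- r) * (1 + r) <= expR (-r) * expR r by rewrite ler_pM2l.
  nra.
have h3 : expR (- r) ^+ m.+1 <= (1 - p) ^+ m.+1.
  by rewrite lerXn2r // ?nnegrE ?expR_ge0 ?ltW.
apply: le_trans h3; rewrite -expRM_natl ler_expR /=.
have : m.+1%:R * r <= 1.
  have e : m.+2%:R = m.+1%:R + 1 :> RR by rewrite -natr1.
  rewrite e in mp.
  have : m.+1%:R * r * (1 - p) <= 1 * (1 - p).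
    rewrite -mulrA hr; nra.
  by rewrite ler_pM2r.
rewrite mulrN; lra.
Qed.

Lemma choose_beta k b m : (1 <= k)%N -> (1 <= b)%N -> (1 <= m)%N -> (m <= k)%N ->
  exists be : 'I_b, m%:R * chan_prob k be <= 1 /\
                    powR k%:R (- b%:R^-1) <= m%:R * chan_prob k be.
Proof.
move=> k1 b1 m1 mk.
set K : RR := k%:R.
have K1 : 1 <= K by rewrite ler1n.
have K0 : 0 < K by rewrite (lt_le_trans ltr01 K1).
have bn0 : b%:R != 0 :> RR by rewrite pnatr_eq0 -lt0n.
pose P := fun j => (0 < j)%N && (m%:R <= powR K (j%:R / b%:R)).
have Pb : P b by rewrite /P b1 /= divff // powRr1 ?(ltW K0) // /K ler_nat.
have exP : exists j, P j by exists b.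
case: (ex_minnP exP) => j /andP[j0 Pj] jmin.
have jb : (j <= b)%N by apply: jmin.
have jb' : (j.-1 < b)%N by case: j j0 {Pj jmin} jb.
exists (Ordinal jb'); rewrite /chan_prob /= prednK //.
have pos : 0 < powR K (j%:R / b%:R) by apply: powR_gt0.
split.
  by rewrite powRN ler_pdivrMr // mul1r.
case: j j0 Pj jmin {jb jb' pos} => [//|[|i]] _ Pj jmin.
  by rewrite div1r ler_peMl ?powR_ge0 // ler1n.
have nP : ~~ P i.+1.
  by apply/negP => /jmin; rewrite ltnn.
rewrite /P /= -ltNge in nP.
have := nP; rewrite -(ltr_pM2r (powR_gt0 (-(i.+2%:R/b%:R)) K0)) => H.
apply: (le_trans _ (ltW H)).
rewrite -powRD; last by apply/implyP => _; rewrite gt_eqF.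
rewrite le_eqVlt; apply/orP; left; apply/eqP; congr powR.
rewrite -[i.+2]addn1 natrD; field; exact: bn0.
Qed.
End Helpers.
Theorem theorem2 :
  exists C : RR, 0 < C /\
  forall (n k b : nat) (act : 'I_n -> option nat) (t0 : nat) (eps : RR),
    (1 <= k)%N -> (1 <= b)%N ->
    (#|[set i : 'I_n | act i != None]| <= k)%N ->
    (exists i, act i = Some t0) ->
    (forall i a, act i = Some a -> (t0 <= a)%N) ->
    0 < eps < 1 ->
    forall T : nat,
      C * powR (k%:R) (b%:R^-1) * ln (eps^-1) < T%:R + 1 ->
      1 - eps <= prob_woken (t0 + T).+1 k b act.
Proof.
exists (expR 1); split; first exact: expR_gt0.
move=> n k b act t0 eps k1 b1 hk [i0 hi0] hmin /andP[e0 e1] T hT.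
set N := (t0 + T).+1.
pose P := fun x : 'I_n * 'I_b => cp k x.2.
have Pb : forall x, 0 <= P x <= 1 by move=> x; apply: cp_bounds.
pose G := fun t : 'I_N => \sum_(u : rnd n b) (if failr act t u then bw P u else 0).
have hprob : prob_woken N k b act = 1 - \prod_t G t.
  rewrite /prob_woken -nonwoken.
  have tot : \sum_(om : outcome n N b) weight k om = 1.
    exact: (bw_sum1 (fun x : 'I_n * 'I_N * 'I_b => cp k x.2)).
  rewrite (bigID (woken_within act)) /= in tot.
  by rewrite -tot addrK.
set K : RR := k%:R.
have K1 : 1 <= K by rewrite ler1n.
have K0 : 0 < K by rewrite (lt_le_trans ltr01 K1).
pose y := powR K (- b%:R^-1).
pose x := powR K (b%:R^-1).
have hxy : x * y = 1.
  rewrite /x /y -powRD ?subrr ?powRr0 //.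
  by apply/implyP => _; rewrite gt_eqF.
have y0 : 0 < y by apply: powR_gt0.
have y1 : y <= 1.
  rewrite /y -[X in _ <= X](powRr0 K); apply: ler_powR => //.
  by rewrite oppr_le0 invr_ge0.
pose q := y * expR (-1).
have q0 : 0 < q by rewrite mulr_gt0 // expR_gt0.
have q1 : q <= 1.
  have eR1 : expR (-1 : RR) <= 1 by rewrite expR_le1 oppr_le0 ler01.
  have := expR_gt0 (-1 : RR); rewrite /q; nra.
have Gb : forall t : 'I_N, 0 <= G t <= (if (t0 <= t)%N then 1 - q else 1).
  move=> t.
  have G0 : 0 <= G t.
    by apply: sumr_ge0 => u _; case: ifP => // _; apply: bw_ge0.
  have hsplit : G t = 1 - \sum_(u : rnd n b) (if ~~ failr act t u then bw P u else 0).
    rewrite -(bw_sum1 P) /G -sumrB; apply: eq_bigr => u _.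
    by case: ifP => _ /=; rewrite ?subr0 ?sub0r ?subrr.
  rewrite G0 /=; case: ifP => tt0; last first.
    rewrite hsplit lerBlDr lerDl; apply: sumr_ge0 => u _.
    by case: ifP => // _; apply: bw_ge0.
  set A := [set i : 'I_n | active act i t].
  have m1 : (1 <= #|A|)%N.
    by apply/card_gt0P; exists i0; rewrite inE /active hi0.
  have mk : (#|A| <= k)%N.
    apply: leq_trans hk; apply: subset_leq_card; apply/subsetP => i.
    by rewrite !inE /active; case: (act i).
  have [be [hb1 hb2]] := choose_beta k1 b1 m1 mk.
  rewrite hsplit lerD2l lerN2.
  apply: (@le_trans _ _ (\sum_(u : rnd n b) (if hr act t u be then bw P u else 0))).
    rewrite hr_prob -/A -mulr_natl mulrA /q.
    have := bern (cp_bounds be k1) m1 hb1 => hB.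
    by apply: ler_pM => //; rewrite ?expR_ge0 ?ltW.
  apply: ler_sum => u _; case: ifP => hu.
    suff -> : ~~ failr act t u by [].
    by rewrite /failr negb_forall; apply/existsP; exists be; rewrite negbK.
  by case: ifP => // _; apply: bw_ge0.
have hprod : \prod_t G t <= (1 - q) ^+ T.+1.
  apply: (@le_trans _ _ (\prod_(t : 'I_N) (if (t0 <= t)%N then 1 - q else 1))).
    by apply: ler_prod => t _; apply: Gb.
  rewrite -(big_mkord xpredT (fun t => if (t0 <= t)%N then 1 - q else 1)).
  rewrite (@big_cat_nat _ _ _ t0 0 N) //=; last by rewrite /N leqW // leq_addr.
  rewrite big_nat_cond big1 ?mul1r; last first.
    by move=> i /andP[/andP[_ it0] _]; rewrite leqNgt it0.
  rewrite (eq_big_nat _ _ (F2 := fun _ => 1 - q)); last first.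
    by move=> i /andP[-> _].
  by rewrite prodr_const_nat /N -addnS addKn.
rewrite hprob; suff hE : (1 - q) ^+ T.+1 <= eps by lra.
have h1q : 1 - q <= expR (- q) by have := expR_ge1Dx (- q).
apply: le_trans (_ : expR (- q) ^+ T.+1 <= _).
  by rewrite lerXn2r // ?nnegrE ?subr_ge0 // expR_ge0.
rewrite -expRM_natl -[X in _ <= X](lnK (x := eps)); last by rewrite posrE.
rewrite ler_expR.
set L := ln (eps^-1).
have hL : ln eps = - L by rewrite /L lnV ?opprK // posrE.
rewrite hL mulrN lerN2.
have hEF : expR (1 : RR) * expR (-1) = 1 by rewrite expRxMexpNx_1.
have hq : q * (expR 1 * x * L) = L.
  transitivity ((x * y) * (expR 1 * expR (-1)) * L); first by rewrite /q; ring.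
  by rewrite hxy hEF !mul1r.
rewrite -[X in X <= _]hq mulrC ler_pM2r //.
rewrite -natr1; exact: ltW.
Qed.
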